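(* For every integer $n\ge0$, with the operator acting on the variable $a$, \[ E(y/x,x;\theta)\{(-1)^nq^{\binom n2}a^n\}=U_n(x,y,a;q). \]
   Context: $q$ is a fixed complex number with $0<|q|<1$; $(a;q)_n=\prod_{i=0}^{n-1}(1-aq^i)$; ${n\brack k}=\frac{(q;q)_n}{(q;q)_k(q;q)_{n-k}}$. $P_n(x,y)=\prod_{i=0}^{n-1}(x-q^iy)$, $U_n(x,y,a;q)=\sum_{k=0}^n{n\brack k}(-1)^kq^{\binom k2}a^kP_{n-k}(x,y)$. For functions of $a$: $D_q\{f(a)\}=\frac{f(a)-f(aq)}{a}$, $\eta^{-1}\{f(a)\}=f(aq^{-1})$, $\theta=\eta^{-1}D_q$ (so $\theta\{f(a)\}=\frac{f(aq^{-1})-f(a)}{aq^{-1}}$), and the Cauchy companion operator is $E(\alpha,\beta;\theta)=\sum_{n=0}^\infty\frac{(\alpha;q)_n(-\beta\theta)^n}{(q;q)_n}$ (with $\theta^0$ the identity). *)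

(* Defs.v *)
From HB Require Import structures.
From mathcomp Require Import all_boot all_order all_algebra.
From mathcomp Require Import complex.
From mathcomp Require Import all_classical all_reals all_analysis.
Set Implicit Arguments. Unset Strict Implicit. Unset Printing Implicit Defensive.
Import Order.TTheory GRing.Theory Num.Theory.
Import numFieldNormedType.Exports.
Local Open Scope ring_scope.

Section QDefs.
Variable C : fieldType.
Variable q : C.

Definition qpoch (a : C) (n : nat) : C := \prod_(i < n) (1 - a * q ^+ i).

Definition qbinom (n k : nat) : C :=
  qpoch q n / (qpoch q k * qpoch q (n - k)).

Definition Pn (n : nat) (x y : C) : C := \prod_(i < n) (x - q ^+ i * y).

Definition Un (n : nat) (x y a : C) : C :=
  \sum_(k < n.+1) qbinom n k * (-1) ^+ k * q ^+ 'C(k, 2) * a ^+ k * Pn (n - k) x y.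

Definition theta (f : C -> C) : C -> C :=
  fun a => (f (a / q) - f a) / (a / q).

Definition theta_pow (k : nat) (f : C -> C) : C -> C := iter k theta f.

(* k-th term of E(alpha,beta;theta){f}(a):
   (alpha;q)_k (-beta theta)^k{f}(a) / (q;q)_k, where (-beta theta)^k = (-beta)^k theta^k
   since beta is a constant (independent of a). *)
Definition E_term (alpha beta : C) (f : C -> C) (a : C) (k : nat) : C :=
  qpoch alpha k * ((- beta) ^+ k * theta_pow k f a) / qpoch q k.

End QDefs.

(* Main.v *)
Require Import Defs.
From HB Require Import structures.
From mathcomp Require Import all_boot all_order all_algebra.
From mathcomp Require Import complex.
From mathcomp Require Import ring.
From mathcomp Require Import all_classical all_reals all_analysis.
Import Order.TTheory GRing.Theory Num.Theory.
Import numFieldTopology.Exports numFieldNormedType.Exports.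
Local Open Scope classical_set_scope.
Local Open Scope ring_scope.

Section Alg.
Variable F : fieldType.
Variable q : F.
Hypothesis q0 : q != 0.

Lemma theta_ext (g h : F -> F) b :
  (forall z, z != 0 -> g z = h z) -> b != 0 -> theta q g b = theta q h b.
Proof.
move=> H b0; rewrite /theta !H //.
by rewrite mulf_neq0 // invr_neq0.
Qed.

Lemma theta_mono c m b : b != 0 ->
  theta q (fun z => c * z ^+ m) b = c * ((q^-1 ^+ m - 1) * q) * b ^+ m.-1.
Proof.
move=> b0; rewrite /theta; case: m => [|m] /=.
  by rewrite !expr0 !subrr !(mul0r, mulr0).
rewrite !exprS exprVn expr_div_n.
have qm : q ^+ m != 0 by rewrite expf_neq0.
field. by rewrite qm q0 b0.
Qed.

Lemma theta_pow_mono c n k z : z != 0 ->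
  theta_pow q k (fun w => c * w ^+ n) z =
  c * (\prod_(j < k) ((q^-1 ^+ (n - j) - 1) * q)) * z ^+ (n - k).
Proof.
elim: k z => [|k IH] z z0.
  by rewrite /theta_pow /= big_ord0 mulr1 subn0.
rewrite /theta_pow iterS.
rewrite (@theta_ext _ (fun w => (c * \prod_(j < k) ((q^-1 ^+ (n - j) - 1) * q)) * w ^+ (n - k))) //.
  by rewrite theta_mono // big_ord_recr /= subnS !mulrA.
Qed.

Lemma Pn_qpoch k x y : x != 0 -> Pn q k x y = x ^+ k * qpoch q (y / x) k.
Proof.
move=> x0; rewrite /Pn /qpoch -[in x ^+ k](card_ord k) -prodr_const -big_split /=.
apply: eq_bigr => i _; field; exact: x0.
Qed.

Lemma qpoch_split n k : (k <= n)%N ->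
  qpoch q q n = (\prod_(j < k) (1 - q ^+ (n - j))) * qpoch q q (n - k).
Proof.
elim: k => [|k IH] hk; first by rewrite big_ord0 mul1r subn0.
rewrite IH ?(ltnW hk) // big_ord_recr /= -mulrA; congr (_ * _).
have -> : (n - k = (n - k.+1).+1)%N by rewrite subnS prednK // subn_gt0.
by rewrite /qpoch big_ord_recr /= -exprS mulrC.
Qed.

Lemma e_claim n k : (k <= n)%N ->
  (\prod_(j < k) (q * q^-1 ^+ (n - j))) * q ^+ 'C(n, 2) = q ^+ 'C(n - k, 2).
Proof.
elim: k => [|k IH] hk; first by rewrite big_ord0 mul1r subn0.
rewrite big_ord_recr /= mulrAC IH ?(ltnW hk) //.
have -> : (n - k = (n - k.+1).+1)%N by rewrite subnS prednK // subn_gt0.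
set m := (n - k.+1)%N.
rewrite binS bin1 exprD exprVn !exprS.
have qm : q ^+ m != 0 by rewrite expf_neq0.
field. by rewrite qm q0.
Qed.

Hypothesis hqk : forall k, qpoch q q k != 0.

Lemma term_eq n k x y a : x != 0 -> a != 0 -> (k <= n)%N ->
  E_term q (y / x) x (fun b => (-1) ^+ n * q ^+ 'C(n, 2) * b ^+ n) a k =
  qbinom q n (n - k) * (-1) ^+ (n - k) * q ^+ 'C(n - k, 2) * a ^+ (n - k)
   * Pn q (n - (n - k)) x y.
Proof.
move=> x0 a0 hk.
rewrite /E_term theta_pow_mono // subKn // Pn_qpoch // /qbinom subKn // (qpoch_split _ _ hk).
rewrite (eq_bigr (fun j : 'I_k => (q * q^-1 ^+ (n - j)) * (1 - q ^+ (n - j)))); last first.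
  move=> j _; rewrite exprVn.
  have qm : q ^+ (n - j) != 0 by rewrite expf_neq0.
  field; exact: qm.
rewrite big_split /= -(e_claim _ _ hk).
have sg : (-1 : F) ^+ n = (-1) ^+ (n - k) * (-1) ^+ k by rewrite -exprD subnK.
rewrite sg (exprNn x).
have hs : (-1 : F) ^+ k * (-1) ^+ k = 1 by rewrite -exprMn mulrNN mulr1 expr1n.
move: hs; set s := (-1 : F) ^+ k => hs.
have key : forall u v : F, u = v * (s * s) -> u = v by move=> u v ->; rewrite hs mulr1.
apply: key.
have h1 := hqk (n - k). have h2 := hqk k.
field. by rewrite h1 h2.
Qed.

Lemma term_zero n k x y a : a != 0 -> (n < k)%N ->
  E_term q (y / x) x (fun b => (-1) ^+ n * q ^+ 'C(n, 2) * b ^+ n) a k = 0.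
Proof.
move=> a0 hk; rewrite /E_term theta_pow_mono //.
rewrite (bigD1 (Ordinal hk)) //= subnn expr0 subrr !mul0r.
by rewrite !(mulr0, mul0r).
Qed.

Lemma sum_eq N n x y a : x != 0 -> a != 0 -> (n < N)%N ->
  \sum_(k < N) E_term q (y / x) x (fun b => (-1) ^+ n * q ^+ 'C(n, 2) * b ^+ n) a k
  = Un q n x y a.
Proof.
move=> x0 a0 hN.
have -> : N = (n.+1 + (N - n.+1))%N by rewrite addnC subnK.
rewrite big_split_ord /= [X in _ + X]big1 ?addr0; last first.
  by move=> i _; rewrite term_zero //= ltnS leq_addr.
rewrite /Un [RHS](reindex_inj rev_ord_inj) /=.
apply: eq_bigr => i _.
by rewrite term_eq // ?subSS // -ltnS.
Qed.

End Alg.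
Theorem mainTheorem8 (R : realType) (q x y a : R[i]) (n : nat) :
  0 < `|q| -> `|q| < 1 -> x != 0 -> a != 0 ->
  (fun N : nat => (\sum_(k < N)
      E_term q (y / x) x (fun b : R[i] => (-1) ^+ n * q ^+ 'C(n, 2) * b ^+ n) a k
       : (R[i] : numFieldType)))
    @ \oo --> (Un q n x y a : (R[i] : numFieldType)).
Proof.
move=> q0 q1 x0 a0.
have qn0 : q != 0 by rewrite -normr_gt0.
have hqk : forall k, qpoch q q k != 0.
  move=> k; rewrite /qpoch prodf_seq_neq0; apply/allP => i _ /=.
  rewrite -exprS subr_eq0; apply/eqP => h.
  have := congr1 (fun z => `|z|) h; rewrite /= normrX normr1 => h'.
  have := exprn_ilt1 i.+1 (normr_ge0 q) q1; rewrite h' ltxx //.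
apply: cvg_near_cst; exists n.+1 => // N /= hN.
exact: sum_eq.
Qed.
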